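(* Let $q$ be a prime power and let $n$ be an odd positive integer coprime to $q$. The following are equivalent: (1) every monic irreducible factor of $x^{n}-1$ in $\mathbb{F}_{q^2}[x]$ is SCRIM; (2) for every prime divisor $l$ of $n$, every monic irreducible factor of $x^{l}-1$ in $\mathbb{F}_{q^2}[x]$ is SCRIM; (3) for every prime divisor $l$ of $n$, $\mathrm{ord}_l(q^2)$ is odd and $\mathrm{ord}_l(q)$ is even.
   Context: $\mathbb{F}_{q^2}$ is the finite field with $q^2$ elements. For $\alpha\in\mathbb{F}_{q^2}$ put $\bar\alpha=\alpha^q$, and for $f(x)=\sum_i f_ix^i$ put $\overline{f(x)}=\sum_i \bar f_i x^i$. For $f(x)$ with $f(0)\neq 0$, $f^*(x)=x^{\deg f}f(0)^{-1}f(1/x)$ and $f^\dagger(x)=\overline{f^*(x)}$. A polynomial is SCRIM if it is monic, irreducible over $\mathbb{F}_{q^2}$, has nonzero constant term, and satisfies $f=f^\dagger$. $\mathrm{ord}_l(a)$ denotes the multiplicative order of $a$ modulo $l$. *)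

(* Defs.v *)
From mathcomp Require Import all_boot all_algebra all_field.
Set Implicit Arguments. Unset Strict Implicit. Unset Printing Implicit Defensive.
Import GRing.Theory.
Local Open Scope ring_scope.

(* F is a finite field with q^2 elements; conjugation a |-> a^q. *)
Definition fconj (F : finFieldType) (q : nat) (a : F) : F := a ^+ q.

Definition pconj (F : finFieldType) (q : nat) (f : {poly F}) : {poly F} :=
  map_poly (@fconj F q) f.

(* f^*(x) = x^{deg f} f(0)^{-1} f(1/x): the reversed coefficient list,
   scaled by f(0)^{-1}.  (deg f = size f - 1.) *)
Definition pstar (F : finFieldType) (f : {poly F}) : {poly F} :=
  (f`_0)^-1 *: \poly_(i < size f) f`_((size f).-1 - i).

Definition pdagger (F : finFieldType) (q : nat) (f : {poly F}) : {poly F} :=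
  pconj q (pstar f).

Definition SCRIM (F : finFieldType) (q : nat) (f : {poly F}) : Prop :=
  [/\ f \is monic, irreducible_poly f, f`_0 != 0 & f = pdagger q f].

(* multiplicative order of a modulo l: least k >= 1 with a^k = 1 (mod l);
   (0 if none exists in 1..l, which never happens for coprime a, l >= 2) *)
Definition ordmod (l a : nat) : nat :=
  head 0%N [seq k <- iota 1 l | (a ^ k %% l == 1 %% l)%N].

Definition prime_power (q : nat) : Prop :=
  exists p k : nat, [/\ prime p, (0 < k)%N & q = (p ^ k)%N].

(* Main.v *)
Require Import Defs.
From mathcomp Require Import all_boot all_algebra all_field.
Import GRing.Theory.
Local Open Scope ring_scope.
From HB Require Import structures.
From mathcomp Require Import zify ring.
From Stdlib Require Import Classical.

Module PA.
Set Implicit Arguments. Unset Strict Implicit. Unset Printing Implicit Defensive.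
Import GRing.Theory.
Local Open Scope ring_scope.

Lemma L1 (w : int) k : (w ^+ 2 %| (w - 1) ^+ k - (-1) ^+ k * (1 - (k%:Z) * w))%Z.
Proof.
elim: k => [|k IH]; first by rewrite !expr0 mul0r subr0 mul1r subrr dvdz0.
have -> : (w - 1) ^+ k.+1 - (-1) ^+ k.+1 * (1 - (k.+1)%:Z * w) =
  (w - 1) * ((w - 1) ^+ k - (-1) ^+ k * (1 - k%:Z * w)) + w ^+ 2 * ((-1) ^+ k * (- k%:Z)).
  have -> : (k.+1)%:Z = k%:Z + 1 by rewrite -addn1 PoszD.
  rewrite !exprS; ring.
by rewrite rpredD //; [apply: dvdz_mull | apply: dvdz_mulr; apply: dvdzz].
Qed.

Lemma PoszX (a b : nat) : Posz (a ^ b)%N = (Posz a) ^+ b.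
Proof. by rewrite -!natz natrX. Qed.

Lemma step_mul (z l e : nat) : odd l -> (l %| z + 1)%N -> (e %| z + 1)%N ->
  (l * e %| z ^ l + 1)%N.
Proof.
move=> ol hl he.
have H := L1 (z + 1)%:Z l.
rewrite PoszD addrK -signr_odd ol expr1 in H.
have -> : (l * e %| z ^ l + 1)%N = ((l * e)%:Z %| (z ^ l + 1)%N%:Z)%Z by [].
have -> : ((z ^ l + 1)%N%:Z) =
   (z%:Z ^+ l - (-1) ^+ 1 * (1 - l%:Z * (z%:Z + 1%:Z))) + l%:Z * (z%:Z + 1%:Z).
  by rewrite PoszD PoszX; ring.
rewrite rpredD //.
  apply: dvdz_trans H; rewrite PoszM expr2; apply: dvdz_mul.
    by rewrite -PoszD.
  by rewrite -PoszD.
by rewrite PoszM; apply: dvdz_mul; [apply: dvdzz | rewrite -PoszD].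
Qed.

Lemma dvd_oddpow (x k : nat) : odd k -> (x + 1 %| x ^ k + 1)%N.
Proof.
move=> ok.
have H := L1 (x + 1)%:Z k.
rewrite PoszD addrK -signr_odd ok expr1 in H.
have -> : (x + 1 %| x ^ k + 1)%N = ((x + 1)%:Z %| (x ^ k + 1)%N%:Z)%Z by [].
have -> : ((x ^ k + 1)%N%:Z) =
   (x%:Z ^+ k - (-1) ^+ 1 * (1 - k%:Z * (x%:Z + 1%:Z))) + k%:Z * (x%:Z + 1%:Z).
  by rewrite PoszD PoszX; ring.
rewrite rpredD //; last by rewrite -PoszD dvdz_mull // dvdzz.
by apply: dvdz_trans H; rewrite -PoszD expr2 dvdz_mull // dvdzz.
Qed.

Definition Aq (q e : nat) := exists m, odd m /\ (e %| q ^ m + 1)%N.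

Lemma Aq_mul q l e : odd l -> Aq q l -> Aq q e -> Aq q (l * e).
Proof.
move=> ol [m [om hm]] [m' [om' hm']].
exists (m * m' * l)%N; split; first by rewrite !oddM om om' ol.
rewrite expnM; apply: step_mul => //.
  by apply: (dvdn_trans hm); rewrite expnM dvd_oddpow.
by apply: (dvdn_trans hm'); rewrite mulnC expnM dvd_oddpow.
Qed.

Lemma Aq_all q n : odd n -> (forall l, prime l -> (l %| n)%N -> Aq q l) -> Aq q n.
Proof.
elim/ltn_ind: n => n IH on hA.
have [n1|n1] := eqVneq n 1%N.
  by exists 1%N; rewrite n1 dvd1n.
have n0 : (0 < n)%N by case: n on {IH hA n1}.
have n2 : (1 < n)%N by case: n n0 n1 {IH on hA} => [|[]].
have pl := pdiv_prime n2.
have dl := pdiv_dvd n.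
rewrite -(divnK dl) mulnC.
apply: Aq_mul; first by apply: (dvdn_odd dl).
  exact: hA.
apply: IH.
- by rewrite ltn_Pdiv // prime_gt1.
- by move: on; rewrite -{1}(divnK dl) oddM => /andP[].
- move=> l' pl' dl'; apply: hA => //; apply: (dvdn_trans dl'); exact: dvdn_div.
Qed.

End PA.
Import PA.

Module PB.
Set Implicit Arguments. Unset Strict Implicit. Unset Printing Implicit Defensive.
Local Close Scope ring_scope.

Lemma head_filter_iota (P : pred nat) a m : has P (iota a m) ->
  let h := head 0%N [seq k <- iota a m | P k] in
  [/\ (a <= h < a + m)%N, P h & forall k, (a <= k < h)%N -> ~~ P k].
Proof.
elim: m a => [|m IH] a //=.
case: ifP => Pa /=.
  move=> _; split => //; first by lia.
  by move=> k; lia.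
move=> /IH [h1 h2 h3]; split => //; first by lia.
move=> k /andP[k1 k2]; have [->|ka] := eqVneq k a; first by rewrite Pa.
by apply: h3; lia.
Qed.

Section Ord.
Variables l a : nat.
Hypothesis hl : prime l.
Hypothesis ha : coprime l a.

Lemma ordmod_spec : let t := ordmod l a in
  [/\ (0 < t)%N, a ^ t %% l = 1%N & forall k, (0 < k < t)%N -> a ^ k %% l != 1%N].
Proof.
have l1 : (1 < l)%N by apply: prime_gt1.
have m1 : (1 %% l = 1)%N by rewrite modn_small.
have hP : has (fun k => a ^ k %% l == 1 %% l)%N (iota 1 l).
  apply/hasP; exists l.-1.
    by rewrite mem_iota; lia.
  have := cyclic.Euler_exp_totient (a := a) (n := l); rewrite totient_prime // => ->.
    by [].
  by rewrite coprime_sym.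
have [h1 h2 h3] := head_filter_iota hP.
rewrite /ordmod; set h := head _ _ in h1 h2 h3 *; split.
- by lia.
- by move/eqP: h2 => ->.
- move=> k hk; have := h3 k; rewrite m1; apply; lia.
Qed.

Lemma ordmod_dvd k : (a ^ k %% l == 1)%N = (ordmod l a %| k)%N.
Proof.
have [t0 ht hmin] := ordmod_spec.
set t := ordmod l a in t0 ht hmin *.
have l1 : (1 < l)%N by apply: prime_gt1.
have m1 : (1 %% l = 1)%N by rewrite modn_small.
have key : (a ^ k %% l = a ^ (k %% t) %% l)%N.
  rewrite {1}(divn_eq k t) expnD [(k %/ t * t)%N]mulnC expnM -modnMml.
  rewrite -[((a ^ t) ^ (k %/ t))%N]/(((a ^ t) ^ (k %/ t))%N) -modnXm ht.
  by rewrite exp1n m1 mul1n.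
apply/idP/idP.
  rewrite key => /eqP h.
  have [r0|r0] := posnP (k %% t).
    by rewrite /dvdn r0.
  by have := hmin _ (andb_true_intro (conj r0 (ltn_pmod k t0))); rewrite h.
move=> /dvdnP [c ->].
by rewrite mulnC expnM -modnXm ht exp1n m1.
Qed.

End Ord.

Lemma sq_mod (l x : nat) : (1 < l)%N -> (l %| x + 1)%N -> ((x ^ 2) %% l = 1)%N.
Proof.
move=> l1 /dvdnP [c hc].
have x1 : (1 <= x)%N.
  case: x hc => // hc.
  have : (l %| 1)%N by rewrite -[1%N]/(0 + 1)%N hc dvdn_mull.
  rewrite dvdn1; lia.
have -> : (x ^ 2 = c * (x - 1) * l + 1)%N.
  have : (x ^ 2 = (x + 1) * (x - 1) + 1)%N by rewrite expnS expn1; nia.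
  by rewrite hc; lia.
by rewrite modnMDl modn_small.
Qed.

Lemma Aq_ord q l : prime l -> odd l -> coprime l q ->
  Aq q l <-> odd (ordmod l (q ^ 2)) && ~~ odd (ordmod l q).
Proof.
move=> pl ol cq.
have l1 : (1 < l)%N by apply: prime_gt1.
have l2 : l != 2%N by apply: contraTneq ol => ->.
have cq2 : coprime l (q ^ 2) by rewrite coprimeXr.
have [t0 ht _] := ordmod_spec pl cq.
have [s0 hs _] := ordmod_spec pl cq2.
set t := ordmod l q in t0 ht *.
set s := ordmod l (q ^ 2) in s0 hs *.
have q0 : (0 < q)%N.
  case: q cq {t s t0 ht s0 hs cq2} => //; rewrite /coprime gcdn0 => /eqP; lia.
split.
  move=> [m [om hm]].
  have H := sq_mod l1 hm.
  have tm2 : (t %| m * 2)%N by rewrite -ordmod_dvd // expnM H.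
  have ntm : ~~ (t %| m)%N.
    rewrite -ordmod_dvd //; apply/negP => /eqP h1.
    have : ((q ^ m + 1) %% l = 2 %% l)%N by rewrite -modnDml h1.
    move/eqP: hm => -> /esym /eqP; rewrite -/(dvdn l 2) dvdn_prime2 //.
    by apply/negP.
  have et : ~~ odd t.
    apply: contra ntm => ot.
    by rewrite -(@Gauss_dvdr t 2 m) ?coprimen2 // mulnC.
  have tu : t = (t./2 * 2)%N.
    by rewrite -[LHS]odd_double_half (negPf et) add0n -muln2.
  have um : (t./2 %| m)%N by rewrite -(@dvdn_pmul2r 2) // -tu.
  have ou : odd t./2 by apply: dvdn_odd um om.
  have su : (s %| t./2)%N by rewrite -ordmod_dvd // -expnM mulnC -tu ht.
  by rewrite et (dvdn_odd su ou).
move=> /andP [os et].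
have tu : t = (t./2 * 2)%N.
  by rewrite -[LHS]odd_double_half (negPf et) add0n -muln2.
set u := t./2 in tu.
have su : (s %| u)%N by rewrite -ordmod_dvd // -expnM mulnC -tu ht.
have us : (u %| s)%N.
  rewrite -(@dvdn_pmul2r 2) // -tu -ordmod_dvd // mulnC expnM hs //.
have us' : u = s by apply/eqP; rewrite eqn_dvd us su.
rewrite us' in tu.
have hx : ((q ^ s) ^ 2 %% l = 1)%N by rewrite -expnM -tu ht.
have x1 : (1 <= q ^ s)%N by rewrite expn_gt0 q0.
have : (l %| (q ^ s - 1) * (q ^ s + 1))%N.
  have -> : ((q ^ s - 1) * (q ^ s + 1) = (q ^ s) ^ 2 - 1)%N.
    by rewrite -subn_sqr exp1n.
  have := divn_eq ((q ^ s) ^ 2) l; rewrite hx => ->.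
  by rewrite addnK dvdn_mull.
rewrite Euclid_dvdM // => /orP [h|h]; last by exists s.
have : (q ^ s %% l = 1)%N.
  have -> : (q ^ s = (q ^ s - 1) + 1)%N by rewrite subnK.
  by rewrite -modnDml (eqP h) add0n modn_small.
move/eqP; rewrite ordmod_dvd // -/t tu => H.
have s0' : (0 < s)%N by move: s0; rewrite -us'.
have := dvdn_leq s0' H; clear -s0'; lia.
Qed.

End PB.
Import PB.

Module PC.
Set Implicit Arguments. Unset Strict Implicit. Unset Printing Implicit Defensive.
Import GRing.Theory.
Import Pdiv.CommonRing.
Import Pdiv.RingMonic.
Import Pdiv.Field.
Local Open Scope ring_scope.

Definition frobn (R : comNzRingType) (p m : nat) (hp : p \in [pchar R]) (x : R) :=
  x ^+ (p ^ m).

Section Frob.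
Variables (R : comNzRingType) (p m : nat) (hp : p \in [pchar R]).
Local Notation fr := (@frobn R p m hp).

Lemma frobn_natp : [pchar R].-nat (p ^ m)%N.
Proof. by rewrite pnatX pnatE ?hp ?(pcharf_prime hp). Qed.

Lemma frobn_is_zmod : zmod_morphism fr.
Proof.
move=> x y; rewrite /frobn.
have hN : (0 < p ^ m)%N by rewrite expn_gt0 prime_gt0 // (pcharf_prime hp).
have h : y ^+ (p ^ m) + (- y) ^+ (p ^ m) = 0.
  by rewrite -exprDn_pchar ?frobn_natp // subrr expr0n eqn0Ngt hN.
rewrite exprDn_pchar ?frobn_natp //.
by move/eqP: h; rewrite addrC addr_eq0 => /eqP ->.
Qed.

Lemma frobn_is_monoid : monoid_morphism fr.
Proof. by split; rewrite /frobn ?expr1n // => x y; rewrite exprMn. Qed.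

HB.instance Definition _ := GRing.isZmodMorphism.Build R R fr frobn_is_zmod.
HB.instance Definition _ := GRing.isMonoidMorphism.Build R R fr frobn_is_monoid.

End Frob.

Section Key.
Variables (F : finFieldType) (p k : nat).
Hypotheses (pp : prime p) (k0 : (0 < k)%N) (cardF : #|F| = ((p ^ k) ^ 2)%N).
Variable f : {poly F}.
Hypotheses (fmon : f \is monic) (firr : irreducible_poly f) (f0 : f`_0 != 0).

Let hI : monic_irreducible_poly f := (firr, fmon).
Let K := {poly %/ f with hI}.
Let iot : {rmorphism F -> K} := qpolyC f.
Let alpha : K := qpolyX f.

Lemma pcharF : p \in [pchar F].
Proof. by apply: (card_finPcharP (n := (k * 2)%N)) => //; rewrite expnM. Qed.

Lemma pcharK : p \in [pchar K].
Proof. exact: (rmorph_pchar iot pcharF). Qed.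

Lemma evalK (g : {poly F}) : (map_poly iot g).[alpha] = in_qpoly f g.
Proof. by rewrite -[g in RHS]comp_polyXr in_qpoly_comp_horner. Qed.

Lemma in_qpoly_eq0 (g : {poly F}) : (in_qpoly f g == 0) = (f %| g).
Proof.
apply/eqP/idP => [/val_eqP /= | hDp].
  by rewrite -Pdiv.IdomainMonic.modpE (mk_monicE hI).
by apply/val_eqP; rewrite /= -Pdiv.IdomainMonic.modpE (mk_monicE hI).
Qed.


Lemma pstar_eval (g : {poly F}) (x : K) : x != 0 ->
  (map_poly iot (pstar g)).[x] =
  iot (g`_0)^-1 * x ^+ (size g).-1 * (map_poly iot g).[x^-1].
Proof.
move=> x0.
rewrite /pstar map_polyZ hornerE -mulrA; congr (_ * _).
set s := size g.
rewrite (@horner_coef_wide _ s); last by rewrite size_map_poly size_poly.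
rewrite (@horner_coef_wide _ s _ x^-1); last by rewrite size_map_poly.
rewrite mulr_sumr (reindex_inj rev_ord_inj) /=.
apply: eq_bigr => i _.
have hlt : (s - i.+1 < s)%N by have := ltn_ord i; lia.
rewrite !coef_map coef_poly /= hlt.
have hi : (s.-1 - (s - i.+1) = i)%N by have := ltn_ord i; lia.
rewrite hi mulrCA; congr (_ * _).
have -> : (s.-1 = (s - i.+1) + i)%N by have := ltn_ord i; lia.
by rewrite exprD exprVn -mulrA mulfV ?mulr1 // expf_neq0.
Qed.

Lemma fixF j (a : F) : a ^+ (p ^ (k * 2 * j)) = a.
Proof.
elim: j => [|j IH]; first by rewrite muln0 expn0 expr1.
rewrite mulnSr expnD exprM IH.
by rewrite expnM -cardF expf_card.
Qed.

Lemma frobK m (hfix : forall a : F, a ^+ (p ^ m) = a) (g : {poly F}) (x : K) :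
  ((map_poly iot g).[x]) ^+ (p ^ m) = (map_poly iot g).[x ^+ (p ^ m)].
Proof.
rewrite -[LHS]/(@frobn K p m pcharK _) -[x ^+ _]/(@frobn K p m pcharK x).
rewrite -horner_map -map_poly_comp.
congr (_ .[_]); apply: eq_map_poly => a /=.
by rewrite /frobn -rmorphXn hfix.
Qed.

Lemma conjK (g : {poly F}) (x : K) :
  ((map_poly iot g).[x]) ^+ (p ^ k) =
  (map_poly iot (pconj (p ^ k) g)).[x ^+ (p ^ k)].
Proof.
rewrite -[LHS]/(@frobn K p k pcharK _) -[x ^+ _]/(@frobn K p k pcharK x).
rewrite -horner_map -map_poly_comp.
rewrite /pconj -map_poly_comp.
congr (_ .[_]); apply: eq_map_poly => a /=.
by rewrite /frobn /fconj -rmorphXn.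
Qed.


Lemma z0 (R : nzRingType) m : (0:R) ^+ (p ^ m) = 0.
Proof. by rewrite expr0n expn_eq0 eqn0Ngt prime_gt0. Qed.

Lemma root_neq0 (y : K) : (map_poly iot f).[y] = 0 -> y != 0.
Proof.
move=> H; apply/eqP => y0; move: H; rewrite y0 horner_coef0 coef_map /=.
by move/eqP; rewrite fmorph_eq0 (negPf f0).
Qed.

Lemma root_dag (y : K) : (map_poly iot f).[y] = 0 ->
  (map_poly iot (pdagger (p ^ k) f)).[(y^-1) ^+ (p ^ k)] = 0.
Proof.
move=> H; have y0 := root_neq0 H.
rewrite /pdagger -conjK pstar_eval ?invr_neq0 // invrK H mulr0 expr0n.
by rewrite expn_eq0 eqn0Ngt prime_gt0 ?andbF.
Qed.

Lemma pconjE (g : {poly F}) : pconj (p ^ k) g = map_poly (@frobn F p k pcharF) g.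
Proof. by []. Qed.

Lemma size_pstar : size (pstar f) = size f.
Proof.
rewrite /pstar size_scale ?invr_neq0 //.
rewrite size_poly_eq // subnn //.
Qed.

Lemma size_dag : size (pdagger (p ^ k) f) = size f.
Proof. by rewrite /pdagger pconjE size_map_poly size_pstar. Qed.

Lemma monic_dag : pdagger (p ^ k) f \is monic.
Proof.
rewrite /pdagger pconjE monicE lead_coef_map.
rewrite /pstar lead_coefZ lead_coefE size_poly_eq ?subnn // coef_poly.
have sf : (0 < size f)%N by rewrite size_poly_gt0 monic_neq0.
rewrite prednK // leqnn subnn mulVf // rmorph1 //.
Qed.

Lemma falpha : (map_poly iot f).[alpha] = 0.
Proof. by rewrite evalK; apply/eqP; rewrite in_qpoly_eq0 dvdpp. Qed.

Lemma KeyB : (exists j, alpha ^+ (p ^ (k * 2 * j)) * alpha ^+ (p ^ k) = 1) ->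
  f = pdagger (p ^ k) f.
Proof.
move=> [j hj].
set y := alpha ^+ (p ^ (k * 2 * j)) in hj.
have fy : (map_poly iot f).[y] = 0.
  by rewrite /y -frobK ?falpha ?z0 // => a; apply: fixF.
have y0 := root_neq0 fy.
have yi : y^-1 = alpha ^+ (p ^ k).
  by rewrite -[RHS](mulKf y0) hj mulr1.
have H := root_dag fy.
rewrite yi -exprM -expnD addnn -muln2 in H.
have HD : (map_poly iot (pdagger (p ^ k) f)).[alpha] = 0.
  apply/eqP; have := expf_eq0 ((map_poly iot (pdagger (p ^ k) f)).[alpha]) (p ^ (k * 2)).
  rewrite expn_gt0 prime_gt0 //= => <-.
  rewrite frobK ?H // => a.
  by have := fixF 1 a; rewrite muln1.
have dv : f %| pdagger (p ^ k) f.
  by rewrite -in_qpoly_eq0 -evalK HD.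
apply/eqP; rewrite -eqp_monic ?monic_dag //.
by rewrite -dvdp_size_eqp // size_dag.
Qed.


Lemma elemK (y : K) : y = (map_poly iot (y : {poly F})).[alpha].
Proof.
rewrite evalK; apply: val_inj => /=.
by rewrite rmodp_small // size_mk_monic.
Qed.

Lemma sizef : (1 < size f)%N.
Proof. by case: firr. Qed.

Lemma no_small_fix t : (0 < t < (size f).-1)%N ->
  alpha ^+ (p ^ (k * 2 * t)) != alpha.
Proof.
move=> /andP [t0 td]; apply/eqP => ha.
set N := (p ^ (k * 2 * t))%N in ha.
have p1 : (1 < p)%N by apply: prime_gt1.
have N2 : (1 < N)%N.
  rewrite /N -[1%N](expn0 p) ltn_exp2l //; lia.
have allr : all (root ('X^N - 'X)) (enum K).
  apply/allP => y _; rewrite /root !hornerE.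
  rewrite [y in y ^+ N]elemK frobK; first by rewrite ha -elemK subrr.
  by move=> a; apply: fixF.
have := max_poly_roots _ allr (enum_uniq K).
rewrite -cardE card_qfpoly cardF size_polyDl ?size_polyXn.
- rewrite ltnS -expnM /N -!expnM leq_exp2l // => H.
  have nz : 'X^(p ^ (k * 2 * t)) - 'X != 0 :> {poly K}.
    by rewrite -size_poly_eq0 size_polyDl ?size_polyXn ?size_polyN ?size_polyX.
  move: (H nz); rewrite mulnA leq_pmul2l ?muln_gt0 ?k0 //; lia.
by rewrite size_polyN size_polyX ltnS.
Qed.

Lemma orbit_inj i j : (i < (size f).-1)%N -> (j < (size f).-1)%N ->
  alpha ^+ (p ^ (k * 2 * i)) = alpha ^+ (p ^ (k * 2 * j)) -> i = j.
Proof.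
wlog ij : i j / (i <= j)%N.
  move=> W hi hj e; have [le|lt] := leqP i j; first exact: W.
  by apply/esym/W => //; apply: ltnW.
move=> hi hj e.
have [->|ne] := eqVneq i j => //.
have lt : (i < j)%N by rewrite ltn_neqAle ne ij.
have e' : alpha ^+ (p ^ (k * 2 * i)) = (alpha ^+ (p ^ (k * 2 * (j - i)))) ^+ (p ^ (k * 2 * i)).
  by rewrite -exprM -expnD -mulnDr subnK // e.
have := @fmorph_inj K K (@frobn K p (k * 2 * i) pcharK) alpha (alpha ^+ (p ^ (k * 2 * (j - i)))).
rewrite /frobn => /(_ e') /esym => E.
by have := no_small_fix (t := (j - i)%N); rewrite E eqxx; lia.
Qed.

Lemma KeyA : f = pdagger (p ^ k) f ->
  exists j, alpha ^+ (p ^ (k * 2 * j)) * alpha ^+ (p ^ k) = 1.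
Proof.
move=> Hf.
have a0 := root_neq0 falpha.
have H := root_dag falpha; rewrite -Hf in H.
set b := (alpha^-1) ^+ (p ^ k) in H.
set d := (size f).-1.
set rs := [seq alpha ^+ (p ^ (k * 2 * j)) | j <- iota 0 d].
have rr : all (root (map_poly iot f)) rs.
  apply/allP => y /mapP [j _ ->]; rewrite /root -frobK ?falpha ?z0 //.
  by move=> a; apply: fixF.
have ur : uniq rs.
  rewrite map_inj_in_uniq ?iota_uniq // => i j; rewrite !mem_iota /= !add0n.
  exact: orbit_inj.
have : b \in rs.
  apply/negPn/negP => nb.
  have := @max_poly_roots _ (map_poly iot f) (b :: rs).
  move=> /(_ _ _ _); rewrite map_poly_eq0 monic_neq0 //= /root H eqxx rr nb ur.
  move=> /(_ isT isT isT).
  rewrite size_map size_iota size_map_poly /d prednK ?ltnn //.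
  by apply: ltnW; apply: sizef.
move=> /mapP [j _ bj]; exists j.
by rewrite -bj /b -exprMn mulVf // expr1n.
Qed.


Lemma alpha_root (g : {poly F}) : f %| g -> (map_poly iot g).[alpha] = 0.
Proof. by move=> h; rewrite evalK; apply/eqP; rewrite in_qpoly_eq0. Qed.

Lemma alpha_pow n : f %| 'X^n - 1 -> alpha ^+ n = 1.
Proof.
move/alpha_root; rewrite rmorphB /= map_polyXn rmorph1 !hornerE.
by move/eqP; rewrite subr_eq0 => /eqP.
Qed.

Lemma alpha_ne1 (g : {poly F}) : f %| g -> g.[1] != 0 -> alpha != 1.
Proof.
move=> /alpha_root H g1; apply/eqP => a1; move: H.
rewrite a1 -(rmorph1 iot) horner_map; apply/eqP.
by rewrite fmorph_eq0.
Qed.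

Lemma suffK n m : f %| 'X^n - 1 -> odd m -> (n %| (p ^ k) ^ m + 1)%N ->
  f = pdagger (p ^ k) f.
Proof.
move=> /alpha_pow an om /dvdnP [c hc].
apply: KeyB; exists m./2.+1.
have -> : (p ^ (k * 2 * m./2.+1) = (p ^ k) ^ m * p ^ k)%N.
  rewrite -expnM -expnD; congr (_ ^ _)%N.
  have hm := odd_double_half m; rewrite om -muln2 in hm.
  set h := m./2 in hm *; rewrite -hm /=; clear; nia.
rewrite exprM -exprMn -{2}(expr1 alpha) -exprD hc mulnC exprM an expr1n.
by rewrite expr1n.
Qed.

Lemma necK (g : {poly F}) l : prime l -> f %| g -> g.[1] != 0 -> f %| 'X^l - 1 ->
  f = pdagger (p ^ k) f -> exists j, (l %| (p ^ k) ^ (j * 2) + p ^ k)%N.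
Proof.
move=> pl fg g1 /alpha_pow al /KeyA [j hj].
have a1 := alpha_ne1 fg g1.
have [m pm ml] := prim_order_exists (prime_gt0 pl) al.
have ml' : m = l.
  case/primeP: pl => _ /(_ m ml) /orP [/eqP m1|/eqP //].
  by move: pm; rewrite m1 => /prim_order_dvd /(_ 1%N); rewrite dvdnn expr1 (negPf a1).
rewrite ml' in pm.
have e : ((p ^ k) ^ (j * 2) = p ^ (k * 2 * j))%N.
  by rewrite -expnM; congr (_ ^ _)%N; lia.
by exists j; rewrite (prim_order_dvd pm) exprD e hj.
Qed.

End Key.

End PC.
Import PC.

Module PD.
Set Implicit Arguments. Unset Strict Implicit. Unset Printing Implicit Defensive.
Import GRing.Theory.
Local Open Scope ring_scope.

Lemma exists_irr (F : fieldType) (g : {poly F}) : (1 < size g)%N ->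
  exists f, [/\ f \is monic, irreducible_poly f & f %| g].
Proof.
suff H : forall N (g : {poly F}), (size g <= N)%N -> (1 < size g)%N ->
  exists f, [/\ f \is monic, irreducible_poly f & f %| g].
  by move=> g1; apply: (H (size g)).
move=> N {g}; elim: N => [|N IH] g sg g1; first by lia.
have [ig|nig] := classic (irreducible_poly g).
  have g0 : g != 0 by rewrite -size_poly_gt0 (ltn_trans _ g1).
  have c0 : (lead_coef g)^-1 != 0 by rewrite invr_eq0 lead_coef_eq0.
  exists ((lead_coef g)^-1 *: g); split.
  - by rewrite monicE lead_coefZ mulVf ?lead_coef_eq0.
  - split; first by rewrite size_scale.
    move=> r r1; rewrite dvdpZr // => rg.
    by apply: eqp_trans (ig _ r1 rg) _; rewrite eqp_sym eqp_scale.
  - by rewrite dvdpZl.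
have [r [r1 rg nr]] : exists r : {poly F}, [/\ size r != 1%N, r %| g & ~~ (r %= g)].
  apply: NNPP => H; apply: nig; split => // r r1 rg.
  apply: NNPP => nr; apply: H; exists r; split => //.
  by apply/negP.
have g0 : g != 0 by rewrite -size_poly_gt0 (ltn_trans _ g1).
have r0 : r != 0 by apply: contraNneq g0 => r0; move: rg; rewrite r0 dvd0p.
have rs : (size r < size g)%N.
  rewrite ltn_neqAle dvdp_leq // andbT; apply: contra nr.
  by rewrite -dvdp_size_eqp.
have r2 : (1 < size r)%N.
  by move: r1 r0; rewrite -size_poly_eq0; case: (size r) => [|[]].
have [f [fm fi fr]] := IH r (leq_trans rs sg) r2.
by exists f; split => //; apply: dvdp_trans fr rg.
Qed.

Lemma f0_of_dvd (F : fieldType) (f : {poly F}) N : (0 < N)%N -> f %| 'X^N - 1 -> f`_0 != 0.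
Proof.
move=> N0 fd; apply/negP => /eqP z.
have : root f 0 by rewrite /root horner_coef0 z.
move/(root_dvdp fd); rewrite /root !hornerE expr0n eqn0Ngt N0 /= sub0r oppr_eq0.
by rewrite oner_eq0.
Qed.

Lemma XnDvd (F : fieldType) l n : (l %| n)%N -> ('X^l - 1 : {poly F}) %| 'X^n - 1.
Proof.
move=> /dvdnP [c ->].
by rewrite mulnC exprM -{2}(expr1n _ c) subrXX dvdp_mulIl.
Qed.

Lemma cyclo_fact (F : fieldType) l : (1 < l)%N -> exists h : {poly F},
  [/\ h %| 'X^l - 1, (1 < size h)%N & h.[1] = l%:R].
Proof.
move=> l1.
pose h : {poly F} := \sum_(i < l) 'X^(l.-1 - i) * 1 ^+ i.
have e : 'X^l - 1 = ('X - 1) * h.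
  by rewrite -subrXX expr1n.
exists h; split.
- by rewrite e dvdp_mulIr.
- have h0 : h != 0.
    apply/eqP => h0; move: e; rewrite h0 mulr0 => /eqP.
    by rewrite -size_poly_eq0 size_Xn_sub_1 //; apply: ltnW.
  have := f_equal (fun p : {poly F} => size p) e.
  rewrite size_mul ?size_Xn_sub_1 ?size_XsubC ?(ltnW l1) //.
    move=> /= E; have E2 : (l.+1 = 1 + size h)%N by rewrite E.
    by rewrite -(ltn_add2l 1) -E2.
  by rewrite -size_poly_eq0 size_XsubC.
- rewrite horner_sum.
  under eq_bigr do rewrite !hornerE !expr1n ?mulr1.
  by rewrite sumr_const card_ord.
Qed.


End PD.
Import PD.

Unset Implicit Arguments. Set Strict Implicit. Set Printing Implicit Defensive.

Theorem theorem2p7 (q : nat) (F : finFieldType) (n : nat) :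
  prime_power q -> #|F| = (q ^ 2)%N ->
  odd n -> (0 < n)%N -> coprime n q ->
  let P1 := forall f : {poly F}, f \is monic -> irreducible_poly f ->
              f %| 'X^n - 1 -> SCRIM q f in
  let P2 := forall l : nat, prime l -> (l %| n)%N ->
              forall f : {poly F}, f \is monic -> irreducible_poly f ->
              f %| 'X^l - 1 -> SCRIM q f in
  let P3 := forall l : nat, prime l -> (l %| n)%N ->
              odd (ordmod l (q ^ 2)) && ~~ odd (ordmod l q) in
  (P1 <-> P2) /\ (P2 <-> P3).
Proof.
move=> [p [k [pp k0 ->]]] cardF on n0 cnq P1 P2 P3.
have lodd : forall l, (l %| n)%N -> odd l by move=> l ln; apply: dvdn_odd ln on.
have lcop : forall l, (l %| n)%N -> coprime l (p ^ k) by move=> l ln; apply: coprime_dvdl ln cnq.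
have hA : P3 <-> (forall l, prime l -> (l %| n)%N -> Aq (p ^ k) l).
  split => H l pl ln.
    by apply/Aq_ord => //; [apply: lodd | apply: lcop | apply: H].
  by apply/Aq_ord => //; [apply: lodd | apply: lcop | apply: H].
have hB : (forall l, prime l -> (l %| n)%N -> Aq (p ^ k) l) -> P1.
  move=> H; have [m [om hm]] := Aq_all on H.
  move=> f fm fi fd.
  have f0 := f0_of_dvd n0 fd.
  split => //.
  exact: (suffK pp k0 cardF fm fi f0 fd om hm).
have hC : P1 -> P2.
  move=> H l pl ln f fm fi fd; apply: H => //.
  by apply: dvdp_trans fd (XnDvd _ ln).
have hD : P2 -> (forall l, prime l -> (l %| n)%N -> Aq (p ^ k) l).
  move=> H l pl ln.
  have [h [hd h1 h1v]] := cyclo_fact F (prime_gt1 pl).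
  have [f [fm fi fh]] := exists_irr h1.
  have fd := dvdp_trans fh hd.
  have f0 := f0_of_dvd (prime_gt0 pl) fd.
  have [_ _ _ fe] := H l pl ln f fm fi fd.
  have hv : h.[1] != 0.
    rewrite h1v -(dvdn_pcharf (pcharF pp cardF)).
    rewrite dvdn_prime2 //; apply/eqP => pl'.
    have := lcop l ln; rewrite -pl' coprime_pexpr // => /eqP.
    by rewrite /coprime gcdnn => p1; move: (prime_gt1 pp); rewrite p1.
  have [j hj] := necK pp k0 cardF fm fi f0 pl fh hv fd fe.
  have [j0|j0] := posnP j.
    by exists 1%N; split => //; rewrite expn1 addnC; move: hj; rewrite j0 mul0n expn0.
  exists (j * 2).-1; split.
    by rewrite -subn1 oddB ?muln_gt0 ?j0 // oddM /= andbF.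
  rewrite -(@Gauss_dvdr l (p ^ k)) ?lcop //.
  have -> : (p ^ k * ((p ^ k) ^ (j * 2).-1 + 1) = (p ^ k) ^ (j * 2) + p ^ k)%N.
    by rewrite mulnDr muln1 -expnS prednK // muln_gt0 j0.
  exact: hj.
split; split.
- exact: hC.
- by move=> H; apply: hB; apply: hD.
- by move=> H; apply/hA; apply: hD.
- by move=> H; apply: hC; apply: hB; apply/hA.
Qed.
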